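(* Let $\Omega\subset\mathbb{C}^n$ be a bounded domain and let $\mathcal R$ and $\mathcal R'$ be quasi-free Hilbert modules of rank $m$, $1\le m<\infty$, over $A(\Omega)$ with generating sets $\{f_1,\dots,f_m\}$ and $\{g_1,\dots,g_m\}$ respectively. Let $\Delta$ be the closure in $\mathcal R\oplus\mathcal R'$ of the linear span of $\{\varphi f_i\oplus\varphi g_i:\varphi\in A(\Omega),1\le i\le m\}$. Then $\Delta$ is the graph of a closed, densely defined, one-to-one linear transformation $\delta=\delta(\mathcal R,\mathcal R')$ from $\mathcal R$ to $\mathcal R'$ having dense range. Moreover, the domain and range of $\delta$ are invariant under the module action and $\delta$ is a module transformation (i.e. $\delta(\varphi h)=\varphi\delta(h)$ for $h$ in its domain and $\varphi\in A(\Omega)$).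
   Context: $A(\Omega)$ is the closure, in the supremum norm on $\Omega$, of the set of functions holomorphic on some neighbourhood of $\overline\Omega$; $\ell^2_m$ is the $m$-dimensional Hilbert space. A quasi-free Hilbert module of rank $m$ over $A(\Omega)$ is a Hilbert space $\mathcal R$ obtained as the completion of $A(\Omega)\otimes\ell^2_m$ (regarded as $\ell^2_m$-valued holomorphic functions on $\Omega$) with respect to an inner product such that: (1) for each $z\in\Omega$ evaluation at $z$ into $\ell^2_m$ is bounded, with norm locally uniformly bounded in $z$; (2) $\|\varphi F\|_{\mathcal R}\le\|\varphi\|_{A(\Omega)}\|F\|_{\mathcal R}$; (3) if $(F_i)$ is Cauchy in $\mathcal R$-norm, then $F_i(z)\to0$ for all $z$ iff $\|F_i\|_{\mathcal R}\to0$. $A(\Omega)$ acts by multiplication. For $z\in\Omega$, the localization $\mathcal R\otimes_{A(\Omega)}\mathbb C_z$ is the quotient $\mathcal R/\mathcal R_z$, $\mathcal R_z$ the closure of $\{\varphi h:\varphi\in A(\Omega),\varphi(z)=0,h\in\mathcal R\}$, with $h\otimes 1_z$ the class of $h$. A generating set of $\mathcal R$ is $\{f_1,\dots,f_m\}\subset\mathcal R$ whose $A(\Omega)$-multiples span a dense subspace of $\mathcal R$ and with $\{f_i\otimes1_z\}$ a basis of $\mathcal R\otimes_{A(\Omega)}\mathbb C_z$ for each $z$; then $\{f_i(z)\}$ is a basis of $\ell^2_m$ for every $z\in\Omega$. *)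

(* Defs.v *)
From HB Require Import structures.
From mathcomp Require Import all_boot all_order all_algebra.
From mathcomp Require Import all_classical all_reals all_analysis.
From mathcomp.real_closed Require Import complex.
Import Order.TTheory GRing.Theory Num.Theory.
Import numFieldNormedType.Exports.

Set Implicit Arguments.
Unset Strict Implicit.
Unset Printing Implicit Defensive.

Local Open Scope ring_scope.
Local Open Scope classical_set_scope.

(* C^n, as a normed C-vector space (complex Frechet differentiability below
   is therefore holomorphy). *)
Definition Cn (R : realType) (n : nat) : normedModType R[i] := 'rV[R[i]]_n.

Definition bounded_domain (R : realType) (n : nat) (Om : set (Cn R n)) : Prop :=
  [/\ Om !=set0, open Om, connected Om & bounded_set Om].

Definition holo_on (R : realType) (n : nat) (U : set (Cn R n))
  (g : Cn R n -> (R[i])^o) : Prop :=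
  open U /\ forall z, U z -> differentiable g z.

Definition pt (R : realType) (n : nat) (Om : set (Cn R n)) := {z : Cn R n | Om z}.

(* A(Omega): sup-norm closure on Omega of the functions holomorphic on some
   neighbourhood of the closure of Omega. *)
Definition inAOm (R : realType) (n : nat) (Om : set (Cn R n)) (phi : pt Om -> R[i])
  : Prop :=
  forall eps : R, 0 < eps -> exists (U : set (Cn R n)) (g : Cn R n -> (R[i])^o),
    [/\ closure Om `<=` U, holo_on U g &
        forall x : pt Om, Normc.normc (phi x - g (sval x)) <= eps].

Definition supnorm (R : realType) (n : nat) (Om : set (Cn R n)) (phi : pt Om -> R[i])
  : R := sup [set Normc.normc (phi x) | x in [set: pt Om]].

Definition Vfun (R : realType) (n m : nat) (Om : set (Cn R n)) :=
  pt Om -> 'rV[R[i]]_m.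

Definition actA (R : realType) (n m : nat) (Om : set (Cn R n))
  (phi : pt Om -> R[i]) (F : Vfun m Om) : Vfun m Om :=
  fun x => phi x *: F x.

Definition l2sq (R : realType) (m : nat) (v : 'rV[R[i]]_m) : R :=
  \sum_(i < m) Normc.normc (v 0 i) ^+ 2.

Definition hnorm (R : realType) (T : Type) (ip : T -> T -> R[i]) (F : T) : R :=
  Num.sqrt (complex.Re (ip F F)).

Definition lspan (R : realType) (T : lmodType R[i]) (P : set T) : set T :=
  fun x => exists (k : nat) (c : 'I_k -> R[i]) (v : 'I_k -> T),
    (forall j, P (v j)) /\ x = \sum_(j < k) c j *: v j.

Definition ncauchy (R : realType) (T : zmodType) (N : T -> R) (u : nat -> T) : Prop :=
  forall e : R, 0 < e -> exists K, forall j k, (K <= j)%N -> (K <= k)%N ->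
    N (u j - u k) < e.
Definition nconv (R : realType) (T : zmodType) (N : T -> R) (u : nat -> T) (l : T)
  : Prop :=
  forall e : R, 0 < e -> exists K, forall k, (K <= k)%N -> N (u k - l) < e.

(* Thanks to condition (3)
   the completion of A(Omega) (x) ell^2_m is realised (as in the paper) as a
   space S of ell^2_m-valued functions on Omega, with inner product ip. *)
Definition quasi_free (R : realType) (n m : nat) (Om : set (Cn R n))
  (S : set (Vfun m Om)) (ip : Vfun m Om -> Vfun m Om -> R[i]) : Prop :=
  let N := hnorm ip in
   [/\ S 0, (forall F G, S F -> S G -> S (F + G)) &
       (forall (c : R[i]) F, S F -> S (c *: F))] /\
   [/\ (forall (c : R[i]) F G H, S F -> S G -> S H ->
          ip (c *: F + G) H = c * ip F H + ip G H),
       (forall F G, S F -> S G -> ip G F = (ip F G)^*),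
       (forall F, S F -> 0 <= ip F F) &
       (forall F, S F -> ip F F = 0 -> F = 0)] /\
   (forall u : nat -> Vfun m Om, (forall k, S (u k)) -> ncauchy N u ->
      exists F, S F /\ nconv N u F) /\
   (* S is the completion of A(Omega) (x) ell^2_m *)
   [/\ (forall F : Vfun m Om, (forall i, inAOm (fun x => F x 0 i)) -> S F) &
       (forall F, S F -> forall e : R, 0 < e -> exists G : Vfun m Om,
          (forall i, inAOm (fun x => G x 0 i)) /\ N (F - G) < e)] /\
   (forall z0 : pt Om, exists (r M : R), 0 < r /\
      forall x : pt Om, `|sval x - sval z0| < (r%:C)%C ->
        forall F, S F -> Num.sqrt (l2sq (F x)) <= M * N F) /\
   (forall phi F, inAOm phi -> S F ->
      S (actA phi F) /\ N (actA phi F) <= supnorm phi * N F) /\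
   (* (3) *)
   (forall u : nat -> Vfun m Om, (forall k, S (u k)) -> ncauchy N u ->
      ((forall x i, (fun k => u k x 0 i) @ \oo --> (0 : (R[i])^o)) <->
       (fun k => N (u k)) @ \oo --> (0 : R))).

Definition nclosure (R : realType) (n m : nat) (Om : set (Cn R n))
  (S : set (Vfun m Om)) (ip : Vfun m Om -> Vfun m Om -> R[i])
  (P : set (Vfun m Om)) : set (Vfun m Om) :=
  fun F => S F /\ forall e : R, 0 < e -> exists G, P G /\ hnorm ip (F - G) < e.

Definition Rz (R : realType) (n m : nat) (Om : set (Cn R n))
  (S : set (Vfun m Om)) (ip : Vfun m Om -> Vfun m Om -> R[i]) (z : pt Om)
  : set (Vfun m Om) :=
  nclosure S ip (lspan (fun F => exists phi h,
                         [/\ inAOm phi, phi z = 0, S h & F = actA phi h])).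

Definition generating_set (R : realType) (n m : nat) (Om : set (Cn R n))
  (S : set (Vfun m Om)) (ip : Vfun m Om -> Vfun m Om -> R[i])
  (f : 'I_m -> Vfun m Om) : Prop :=
  [/\ (forall i, S (f i)),
      (forall F, S F -> nclosure S ip
         (lspan (fun G => exists phi i, inAOm phi /\ G = actA phi (f i))) F) &
      (* {f_i (x) 1_z} is a basis of S / R_z, for every z *)
      (forall z : pt Om,
         (forall c : 'I_m -> R[i],
            Rz S ip z (\sum_(i < m) c i *: f i) -> forall i, c i = 0) /\
         (forall h, S h -> exists c : 'I_m -> R[i],
            Rz S ip z (h - \sum_(i < m) c i *: f i)))].

Definition dsnorm (R : realType) (T : Type) (ip ip' : T -> T -> R[i]) (p : T * T) : R :=
  Num.sqrt (hnorm ip p.1 ^+ 2 + hnorm ip' p.2 ^+ 2).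

Definition Delta (R : realType) (n m : nat) (Om : set (Cn R n))
  (S S' : set (Vfun m Om)) (ip ip' : Vfun m Om -> Vfun m Om -> R[i])
  (f g : 'I_m -> Vfun m Om) : set (Vfun m Om * Vfun m Om) :=
  fun p => [/\ S p.1, S' p.2 &
    forall e : R, 0 < e -> exists q,
      lspan (fun r => exists phi i,
               inAOm phi /\ r = (actA phi (f i), actA phi (g i))) q /\
      dsnorm ip ip' (p - q) < e].

(* Main.v *)
Require Import Defs.
From HB Require Import structures.
From mathcomp Require Import all_boot all_order all_algebra.
From mathcomp Require Import all_classical all_reals all_analysis.
From mathcomp.real_closed Require Import complex.
From mathcomp Require Import ring lra.
Import Order.TTheory GRing.Theory Num.Theory.
Import numFieldNormedType.Exports.
Local Open Scope complex_scope.
Local Open Scope ring_scope.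
Local Open Scope classical_set_scope.
Section Cx.
Variable R : realType.
Lemma ReD (x y : R[i]) : complex.Re (x + y) = complex.Re x + complex.Re y.
Proof. by case: x => ? ?; case: y => ? ?. Qed.
Lemma ReN (x : R[i]) : complex.Re (- x) = - complex.Re x.
Proof. by case: x => ? ?. Qed.
Lemma ReRM (t : R) (x : R[i]) : complex.Re (t%:C * x) = t * complex.Re x.
Proof. by case: x => a b /=; rewrite mul0r subr0. Qed.
Lemma ReJ (x : R[i]) : complex.Re (x^*) = complex.Re x.
Proof. by case: x => ? ?. Qed.
Lemma conjR (t : R) : (t%:C)^* = t%:C :> R[i].
Proof. exact: conjc_real. Qed.
End Cx.

Section Feval.
Context {R : realType} {n m : nat} {Om : set (Cn R n)}.
Lemma fevalL (c : R[i]) (F G : Vfun m Om) z : (c *: F + G) z = c *: F z + G z.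
Proof. by []. Qed.
Lemma fevalD (F G : Vfun m Om) z : (F + G) z = F z + G z.
Proof. by []. Qed.
Lemma fevalB (F G : Vfun m Om) z : (F - G) z = F z - G z.
Proof. by []. Qed.
Lemma fevalZ (c : R[i]) (F : Vfun m Om) z : (c *: F) z = c *: F z.
Proof. by []. Qed.
Lemma feval0 z : (0 : Vfun m Om) z = 0.
Proof. by []. Qed.
End Feval.

Section IP.
Context {R : realType} {n m : nat} {Om : set (Cn R n)}.
Context {S : set (Vfun m Om)} {ip : Vfun m Om -> Vfun m Om -> R[i]}.
Hypothesis qf : quasi_free S ip.
Local Notation N := (hnorm ip).

Lemma qS0 : S 0. Proof. by case: qf => [[]]. Qed.
Lemma qSD {F G} : S F -> S G -> S (F + G). Proof. by case: qf => [[_ h _]] _; exact: h. Qed.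
Lemma qSZ c {F} : S F -> S (c *: F). Proof. by case: qf => [[_ _ h]] _; exact: h. Qed.
Lemma qSN {F} : S F -> S (- F).
Proof. by move=> h; rewrite -scaleN1r; apply: qSZ. Qed.
Lemma qSB {F G} : S F -> S G -> S (F - G).
Proof. by move=> h1 h2; apply: qSD => //; apply: qSN. Qed.
Lemma qSL c {F G} : S F -> S G -> S (c *: F + G).
Proof. by move=> h1 h2; apply: qSD => //; apply: qSZ. Qed.

Lemma ipL c {F G H} : S F -> S G -> S H -> ip (c *: F + G) H = c * ip F H + ip G H.
Proof. by case: qf => _ [[h _ _ _] _]; exact: h. Qed.
Lemma ipJ {F G} : S F -> S G -> ip G F = (ip F G)^*.
Proof. by case: qf => _ [[_ h _ _] _]; exact: h. Qed.
Lemma ipge0 F : S F -> 0 <= ip F F.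
Proof. by case: qf => _ [[_ _ h _] _]; exact: h. Qed.
Lemma ipdef F : S F -> ip F F = 0 -> F = 0.
Proof. by case: qf => _ [[_ _ _ h] _]; exact: h. Qed.

Lemma ip0l H : S H -> ip 0 H = 0.
Proof.
move=> SH; have := (ipL 1 qS0 qS0 SH); rewrite scale1r addr0 mul1r.
by move=> /(congr1 (fun x => x - ip 0 H)); rewrite subrr addrK.
Qed.
Lemma ip0r H : S H -> ip H 0 = 0.
Proof. by move=> SH; rewrite (ipJ qS0 SH) ip0l // conjC0. Qed.
Lemma ipZl c {F H} : S F -> S H -> ip (c *: F) H = c * ip F H.
Proof. by move=> SF SH; rewrite -[c *: F]addr0 (ipL c SF qS0 SH) ip0l // addr0. Qed.
Lemma ipDl {F G H} : S F -> S G -> S H -> ip (F + G) H = ip F H + ip G H.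
Proof. by move=> SF SG SH; have := ipL 1 SF SG SH; rewrite scale1r mul1r. Qed.
Lemma ipZr c {F H} : S F -> S H -> ip F (c *: H) = c^* * ip F H.
Proof. by move=> SF SH; rewrite (ipJ (qSZ c SH) SF) (ipZl c SH SF) rmorphM [ip F H](ipJ SH SF). Qed.
Lemma ipDr {F G H} : S F -> S G -> S H -> ip H (F + G) = ip H F + ip H G.
Proof.
move=> SF SG SH; rewrite (ipJ (qSD SF SG) SH) (ipDl SF SG SH) rmorphD.
by rewrite [ip H F](ipJ SF SH) [ip H G](ipJ SG SH).
Qed.

Lemma ImFF {F} : S F -> complex.Im (ip F F) = 0.
Proof. by move=> /ipge0; rewrite lecE => /andP[/eqP h _]; rewrite h. Qed.
Lemma ReFF {F} : S F -> 0 <= complex.Re (ip F F).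
Proof. by move=> /ipge0; rewrite lecE => /andP[_]. Qed.
Lemma ipFFE {F} : S F -> ip F F = (complex.Re (ip F F))%:C.
Proof. by move=> /ImFF; case: (ip F F) => a b /= ->. Qed.

Lemma hnorm_ge0 F : 0 <= N F.
Proof. exact: sqrtr_ge0. Qed.
Lemma hnormE F : N F = Num.sqrt (complex.Re (ip F F)).
Proof. by []. Qed.
Lemma hnorm0 : N 0 = 0.
Proof. rewrite hnormE ip0l; [exact: sqrtr0 | exact: qS0]. Qed.

Lemma Re_expand (t : R) {F G} : S F -> S G ->
  complex.Re (ip (F + t%:C *: G) (F + t%:C *: G)) =
  complex.Re (ip F F) + 2 * t * complex.Re (ip F G) + t ^+ 2 * complex.Re (ip G G).
Proof.
move=> SF SG; have SG' := qSZ t%:C SG.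
have SFG := qSD SF SG'.
rewrite (ipDl SF SG' SFG) (ipZl _ SG SFG) (ipDr SF SG' SF) (ipDr SF SG' SG).
rewrite (ipZr _ SF SG) (ipZr _ SG SG) conjR.
rewrite !(ReD, ReRM) (ipJ SF SG) ReJ; ring.
Qed.

Lemma CS {F G} : S F -> S G -> complex.Re (ip F G) ^+ 2 <= complex.Re (ip F F) * complex.Re (ip G G).
Proof.
move=> SF SG; set a := complex.Re (ip F F); set r := complex.Re (ip F G); set c := complex.Re (ip G G).
have c0 : 0 <= c by apply: ReFF.
have [cz|cp] := eqVneq c 0.
  have G0 : G = 0 by apply: ipdef => //; rewrite ipFFE // -/c cz.
  by rewrite /r G0 ip0r // /= expr0n /= mulr_ge0 // ReFF.
have cpos : 0 < c by rewrite lt_def cp c0.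
have := ReFF (qSD SF (qSZ (- r / c)%:C SG)); rewrite Re_expand // -/a -/r -/c.
have -> : a + 2 * (- r / c) * r + (- r / c) ^+ 2 * c = (a * c - r ^+ 2) / c.
  by field.
by move=> h; have := mulr_ge0 h c0; rewrite divfK // subr_ge0.
Qed.

Lemma hnormD {F G} : S F -> S G -> N (F + G) <= N F + N G.
Proof.
move=> SF SG; rewrite !hnormE.
have := Re_expand 1 SF SG; rewrite scale1r => ->.
have hs : 0 <= Num.sqrt (complex.Re (ip F F)) + Num.sqrt (complex.Re (ip G G)).
  by rewrite addr_ge0 // sqrtr_ge0.
rewrite -(ger0_norm hs) -sqrtr_sqr ler_sqrt ?sqr_ge0 //.
rewrite sqrrD !sqr_sqrtr ?ReFF // expr1n mulr1 mul1r.
have hr : complex.Re (ip F G) <= Num.sqrt (complex.Re (ip F F)) * Num.sqrt (complex.Re (ip G G)).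
  rewrite -sqrtrM ?ReFF //.
  apply: le_trans (ler_norm _) _.
  by rewrite -sqrtr_sqr ler_sqrt ?CS // mulr_ge0 // ReFF.
move: hr; rewrite mulr2n; lra.
Qed.

Lemma hnormZ c {F} : S F -> N (c *: F) = Normc.normc c * N F.
Proof.
move=> SF; rewrite !hnormE (ipZl c SF (qSZ c SF)) (ipZr c SF SF) (ipFFE SF).
case: c => a b; move: (complex.Re (ip F F)) (ReFF SF) => p p0 /=.
rewrite -sqrtrM ?addr_ge0 ?sqr_ge0 //; congr Num.sqrt.
ring.
Qed.

Lemma hnormN {F} : S F -> N (- F) = N F.
Proof.
move=> SF; rewrite -scaleN1r hnormZ //.
by rewrite /Normc.normc /= oppr0 expr0n /= addr0 sqrrN expr1n sqrtr1 mul1r.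
Qed.

Lemma hnormB {F G} : S F -> S G -> N (F - G) = N (G - F).
Proof. by move=> SF SG; rewrite -(hnormN (qSB SG SF)) opprB. Qed.

Lemma hnormL c {F G} : S F -> S G -> N (c *: F + G) <= Normc.normc c * N F + N G.
Proof. by move=> SF SG; rewrite -(hnormZ c SF); apply: hnormD => //; apply: qSZ. Qed.

Lemma hnorm_tri {F G H} : S F -> S G -> S H -> N (F - H) <= N (F - G) + N (G - H).
Proof.
move=> SF SG SH; have -> : F - H = (F - G) + (G - H) by rewrite addrA subrK.
by apply: hnormD; apply: qSB.
Qed.
End IP.
Section Span.
Variables (R : realType) (T : lmodType R[i]) (P : set T).

Lemma lspan_ind (X : set T) : X 0 ->
  (forall c x y, X x -> X y -> X (c *: x + y)) -> P `<=` X -> lspan P `<=` X.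
Proof.
move=> X0 XL PX x [k [c [v [Pv ->]]]].
elim: k c v Pv => [|k IH] c v Pv; first by rewrite big_ord0.
rewrite big_ord_recr /= addrC; apply: XL; first exact: PX.
by apply: IH => j; apply: Pv.
Qed.

Lemma lspan1 x : P x -> lspan P x.
Proof.
move=> Px; exists 1%N, (fun _ => 1), (fun _ => x); split => //.
by rewrite big_ord1 scale1r.
Qed.

Lemma lspan0 : lspan P 0.
Proof. by exists 0%N, (fun _ => 0), (fun _ => 0); split => [[]//|]; rewrite big_ord0. Qed.

Lemma lspanZ c x : lspan P x -> lspan P (c *: x).
Proof.
move=> [k [a [v [Pv ->]]]]; exists k, (fun j => c * a j), v; split => //.
by rewrite scaler_sumr; apply: eq_bigr => j _; rewrite scalerA.
Qed.

Lemma lspanD x y : lspan P x -> lspan P y -> lspan P (x + y).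
Proof.
move=> [k1 [a [v [Pv ->]]]] [k2 [b [w [Pw ->]]]].
exists (k1 + k2)%N, (fun i => match fintype.split i with inl j => a j | inr j => b j end),
  (fun i => match fintype.split i with inl j => v j | inr j => w j end); split.
  by move=> i; case: (fintype.split i).
rewrite big_split_ord /=; congr (_ + _); apply: eq_bigr => j _.
  by have := unsplitK (inl j : 'I_k1 + 'I_k2); rewrite /= => ->.
by have := unsplitK (inr j : 'I_k1 + 'I_k2); rewrite /= => ->.
Qed.

Lemma lspanL c x y : lspan P x -> lspan P y -> lspan P (c *: x + y).
Proof. by move=> hx hy; apply: lspanD => //; apply: lspanZ. Qed.
End Span.

Section Cnorm.
Variable R : realType.
Local Notation nc := (@Normc.normc R).
Lemma nc_ge0 (x : R[i]) : 0 <= nc x.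
Proof. by case: x => a b; apply: sqrtr_ge0. Qed.
Lemma ncD (x y : R[i]) : nc (x + y) <= nc x + nc y.
Proof. exact: le_normcD. Qed.
Lemma ncM (x y : R[i]) : nc (x * y) = nc x * nc y.
Proof. exact: Normc.normcM. Qed.
Lemma ncN (x : R[i]) : nc (- x) = nc x.
Proof. exact: normcN. Qed.
Lemma nc0 : nc 0 = 0.
Proof. exact: Normc.normc0. Qed.
Lemma ncB (x y : R[i]) : nc (x - y) = nc (y - x).
Proof. by rewrite -ncN opprB. Qed.
Lemma nc_eq0 (x : R[i]) : nc x = 0 -> x = 0.
Proof. exact: Normc.eq0_normc. Qed.
Lemma nc_sum k (a : 'I_k -> R[i]) : nc (\sum_(j < k) a j) <= \sum_(j < k) nc (a j).
Proof.
elim: k a => [|k IH] a; first by rewrite !big_ord0 nc0.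
rewrite !big_ord_recr /=; eapply le_trans; first exact: ncD. rewrite lerD2r; exact: IH.
Qed.
End Cnorm.

Section AOm.
Context {R : realType} {n : nat} {Om : set (Cn R n)}.
Local Notation nc := (@Normc.normc R).

Lemma inA_const (a : R[i]) : inAOm (fun _ : pt Om => a).
Proof.
move=> e e0; exists setT, (fun _ => a : (R[i])^o); split => //.
  split; first exact: openT.
  by move=> z _; apply: differentiable_cst.
by move=> x; rewrite subrr nc0 ltW.
Qed.

Definition bnd (phi : pt Om -> R[i]) := exists B, 0 <= B /\ forall x, nc (phi x) <= B.

Lemma inA_mul phi psi : bnd phi -> bnd psi -> inAOm phi -> inAOm psi ->
  inAOm (fun x => phi x * psi x).
Proof.
move=> [Bp [Bp0 hBp]] [Bq [Bq0 hBq]] Ap Aq e e0.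
set K := Bp + Bq + 1.
have K0 : 0 < K by rewrite /K ltr_wpDl ?addr_ge0.
set d := Num.min 1 (e / K).
have d0 : 0 < d by rewrite lt_min ltr01 divr_gt0.
have d1 : d <= 1 by rewrite ge_min lexx.
have dK : d * K <= e by rewrite -ler_pdivlMr // ge_min lexx orbT.
have [U1 [g1 [c1 H1 b1]]] := Ap d d0.
case: H1 => o1 h1.
have [U2 [g2 [c2 H2 b2]]] := Aq d d0.
case: H2 => o2 h2.
exists (U1 `&` U2), (fun x => (g1 x * g2 x : (R[i])^o)); split.
- by move=> x cx; split; [exact: c1|exact: c2].
- split; first exact: openI.
  by move=> z [z1 z2]; apply: differentiableM; [exact: h1|exact: h2].
- move=> x.
  have -> : phi x * psi x - g1 (sval x) * g2 (sval x) =
    phi x * (psi x - g2 (sval x)) + (phi x - g1 (sval x)) * g2 (sval x) by ring.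
  eapply le_trans; first exact: ncD.
  rewrite !ncM.
  have hg2 : nc (g2 (sval x)) <= Bq + d.
    have -> : g2 (sval x) = psi x - (psi x - g2 (sval x)) by rewrite opprB addrC subrK.
    eapply le_trans; first exact: ncD. rewrite ncN; apply: lerD => //.
  have t1 : nc (phi x) * nc (psi x - g2 (sval x)) <= Bp * d :=
    ler_pM (nc_ge0 _ _) (nc_ge0 _ _) (hBp x) (b2 x).
  have t2 : nc (phi x - g1 (sval x)) * nc (g2 (sval x)) <= d * (Bq + d) :=
    ler_pM (nc_ge0 _ _) (nc_ge0 _ _) (b1 x) hg2.
  eapply le_trans; first exact: (lerD t1 t2).
  move: dK; rewrite /K => dK; nra.
Qed.
End AOm.
Section QF.
Context {R : realType} {n m : nat} {Om : set (Cn R n)}.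
Context {S : set (Vfun m Om)} {ip : Vfun m Om -> Vfun m Om -> R[i]}.
Hypothesis qf : quasi_free S ip.
Local Notation N := (hnorm ip).
Local Notation nc := (@Normc.normc R).

Lemma qf_fun (F : Vfun m Om) : (forall i, inAOm (fun x => F x 0 i)) -> S F.
Proof. by case: qf => _ [_ [_ [[h _] _]]]; exact: h. Qed.

Lemma qf_const (v : 'rV[R[i]]_m) : S (fun _ => v).
Proof. by apply: qf_fun => i; exact: inA_const. Qed.

Lemma qf_act {phi F} : inAOm phi -> S F ->
  S (actA phi F) /\ N (actA phi F) <= supnorm phi * N F.
Proof. by case: qf => _ [_ [_ [_ [_ [h _]]]]]; exact: h. Qed.

Lemma qf_evalb (z : pt Om) : exists M, forall F, S F -> Num.sqrt (l2sq (F z)) <= M * N F.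
Proof.
case: qf => _ [_ [_ [_ [h _]]]]; have [r [M [r0 hM]]] := h z.
exists M => F SF; apply: hM => //.
by rewrite subrr normr0 ltcE /= eqxx r0.
Qed.

Lemma ent_le (v : 'rV[R[i]]_m) i : nc (v 0 i) <= Num.sqrt (l2sq v).
Proof.
have s0 : 0 <= l2sq v by apply: sumr_ge0 => j _; exact: sqr_ge0.
rewrite -(ger0_norm (nc_ge0 _ _)) -sqrtr_sqr ler_sqrt //.
by rewrite /l2sq (bigD1 i) //= lerDl; apply: sumr_ge0 => j _; exact: sqr_ge0.
Qed.

Lemma evalb_ent (z : pt Om) : exists M, 0 <= M /\ forall F i, S F -> nc (F z 0 i) <= M * N F.
Proof.
have [M hM] := qf_evalb z; exists `|M|; split => // F i SF.
apply: le_trans (ent_le _ i) _; apply: le_trans (hM F SF) _.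
by apply: ler_wpM2r; [exact: hnorm_ge0 | exact: ler_norm].
Qed.

Lemma le0_by (x C : R) : 0 <= C -> (forall e, 0 < e -> x <= C * e) -> x <= 0.
Proof.
move=> C0 h; apply/ler_addgt0Pr => e e0; rewrite add0r.
have C1 : 0 < C + 1 by rewrite ltr_wpDl.
apply: le_trans (h (e / (C + 1)) _) _; first by rewrite divr_gt0.
rewrite mulrA ler_pdivrMr //; nra.
Qed.

Lemma inA_bnd (phi : pt Om -> R[i]) : (0 < m)%N -> inAOm phi -> bnd phi.
Proof.
move=> m0 Aphi.
case: (pselect (has_sup [set nc (phi x) | x in [set: pt Om]])) => hs.
  exists (Num.max 0 (sup [set nc (phi x) | x in [set: pt Om]])); split.
    by rewrite le_max lexx.
  move=> x; rewrite le_max; apply/orP; right.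
  by apply: sup_upper_bound => //; exists x.
have sn0 : supnorm phi = 0 by rewrite /supnorm sup_out.
exists 0; split => // x.
pose E1 : Vfun m Om := fun _ => const_mx 1.
have SE1 : S E1 by apply: qf_const.
have [SA hA] := qf_act Aphi SE1.
rewrite sn0 mul0r in hA.
have NA : N (actA phi E1) = 0 by apply/eqP; rewrite eq_le hA hnorm_ge0.
have [M [M0 hM]] := evalb_ent x.
have := hM _ (Ordinal m0) SA; rewrite NA mulr0.
by rewrite /actA /E1 !mxE mulr1.
Qed.

Lemma Rz_vanish z F : Rz S ip z F -> F z = 0.
Proof.
move=> [SF hF].
have [M [M0 hM]] := evalb_ent z.
apply/rowP => i; rewrite mxE; apply: nc_eq0; apply/eqP; rewrite eq_le nc_ge0 andbT.

eapply le0_by; first exact: M0.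
move=> e e0.
have [G [LG hG]] := hF e e0.
have [SG Gz] : S G /\ G z = 0.
  apply: (@lspan_ind R _ _ (fun G => S G /\ G z = 0) _ _ _ G LG).
  - by split; [exact: (qS0 qf)|].
  - move=> c x y [Sx xz] [Sy yz]; split; first exact: (qSL qf).
    by rewrite fevalL xz yz scaler0 addr0.
  - move=> _ [phi [h [Aphi phiz Sh ->]]]; split; first by case: (qf_act Aphi Sh).
    by rewrite /actA phiz scale0r.
have -> : F z 0 i = (F - G) z 0 i by rewrite fevalB Gz subr0.
apply: le_trans (hM _ _ (qSB qf SF SG)) _.
by apply: ler_wpM2l => //; apply: ltW.
Qed.
End QF.
Section Extra.
Context {R : realType} {n m : nat} {Om : set (Cn R n)}.
Context {S : set (Vfun m Om)} {ip : Vfun m Om -> Vfun m Om -> R[i]}.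
Hypothesis qf : quasi_free S ip.
Local Notation N := (hnorm ip).
Local Notation nc := (@Normc.normc R).

Lemma feval_sum k (F : 'I_k -> Vfun m Om) z : (\sum_(i < k) F i) z = \sum_(i < k) F i z.
Proof. by elim/big_rec2: _ => // i y1 y2 _ <-. Qed.

Lemma Amat_unit (f : 'I_m -> Vfun m Om) z : generating_set S ip f ->
  (\matrix_(i < m) f i z) \in unitmx.
Proof.
move=> [_ _ hgen]; rewrite -row_full_unit -sub1mx; apply/row_subP => i.
set v := row i 1%:M.
have [_ hsp] := hgen z.
have [c hc] := hsp _ (qf_const qf v).
have := Rz_vanish qf z _ hc; rewrite fevalB feval_sum /=.
move/eqP; rewrite subr_eq0 => /eqP ->.
apply/submxP; exists (\row_j c j); rewrite mulmx_sum_row; apply: eq_bigr => j _.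
by rewrite rowK mxE.
Qed.

Lemma evsq (z : pt Om) : exists M, 0 <= M /\ forall F, S F -> Num.sqrt (l2sq (F z)) <= M * N F.
Proof.
have [M hM] := qf_evalb qf z; exists `|M|; split => // F SF.
apply: le_trans (hM F SF) _.
by apply: ler_wpM2r; [exact: hnorm_ge0 | exact: ler_norm].
Qed.

Lemma mx_ent (v : 'rV[R[i]]_m) (X : 'M[R[i]]_m) j :
  nc ((v *m X) 0 j) <= Num.sqrt (l2sq v) * \sum_l nc (X l j).
Proof.
rewrite mxE mulr_sumr; eapply le_trans; first exact: nc_sum.
apply: ler_sum => l _; rewrite ncM; apply: ler_wpM2r; [exact: nc_ge0|exact: ent_le].
Qed.

Lemma actA0 phi : actA phi (0 : Vfun m Om) = 0.
Proof. by apply/funext => x; rewrite /actA feval0 scaler0. Qed.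
Lemma actAL phi c (F G : Vfun m Om) : actA phi (c *: F + G) = c *: actA phi F + actA phi G.
Proof.
apply/funext => x; rewrite /actA !fevalL scalerDr !scalerA.
by rewrite mulrC.
Qed.
Lemma actAB phi (F G : Vfun m Om) : actA phi (F - G) = actA phi F - actA phi G.
Proof.
by apply/funext => x; rewrite /actA !fevalB scalerBr.
Qed.
Lemma actA_comp phi psi (F : Vfun m Om) :
  actA phi (actA psi F) = actA (fun x => phi x * psi x) F.
Proof. by apply/funext => x; rewrite /actA scalerA. Qed.
End Extra.
Lemma lin_bound {R : realType} {C a b e : R} : 0 <= C -> 0 <= a ->
  a < e / 2 / (C + 1) -> b < e / 2 -> C * a + b < e.
Proof.
move=> C0 a0 ha hb; have K0 : 0 < C + 1 by lra.
have h1 : (C + 1) * a < e / 2 by rewrite mulrC -ltr_pdivlMr.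
nra.
Qed.

Section Main.
Variables (R : realType) (n m : nat) (Om : set (Cn R n)).
Variables (S S' : set (Vfun m Om)) (ip ip' : Vfun m Om -> Vfun m Om -> R[i]).
Variables (f g : 'I_m -> Vfun m Om).
Hypotheses (m0 : (0 < m)%N) (qf : quasi_free S ip) (qf' : quasi_free S' ip').
Hypotheses (gf : generating_set S ip f) (gg : generating_set S' ip' g).
Local Notation N := (hnorm ip).
Local Notation N' := (hnorm ip').
Local Notation nc := (@Normc.normc R).

Definition Lset := lspan (fun r => exists phi i,
               inAOm phi /\ r = (actA phi (f i), actA phi (g i))).
Local Notation Dl := (Delta S S' ip ip' f g).

Lemma Lset_S {q} : Lset q -> S q.1 /\ S' q.2.
Proof.
move=> Lq; apply: (@lspan_ind _ _ _ (fun q => S q.1 /\ S' q.2) _ _ _ q Lq).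
- by split; [exact: (qS0 qf)|exact: (qS0 qf')].
- move=> c x y [Sx1 Sx2] [Sy1 Sy2]; split; [exact: (qSL qf)|exact: (qSL qf')].
- move=> _ [phi [i [Aphi ->]]]; split.
    by case: (qf_act qf Aphi (let: And3 h _ _ := gf in h i)).
  by case: (qf_act qf' Aphi (let: And3 h _ _ := gg in h i)).
Qed.

Lemma DeltaP h k : Dl (h, k) <->
  [/\ S h, S' k & forall e, 0 < e -> exists q, Lset q /\ N (h - q.1) < e /\ N' (k - q.2) < e].
Proof.
split.
  case=> /= Sh Sk hd; split => // e e0; have [q [Lq hq]] := hd e e0.
  exists q; split => //; rewrite /dsnorm /= in hq; split; apply: le_lt_trans hq.
    rewrite -[X in X <= _](ger0_norm (hnorm_ge0 _)) -sqrtr_sqr ler_sqrt.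
      by rewrite lerDl sqr_ge0.
    by rewrite addr_ge0 ?sqr_ge0.
  rewrite -[X in X <= _](ger0_norm (hnorm_ge0 _)) -sqrtr_sqr ler_sqrt.
    by rewrite lerDr sqr_ge0.
  by rewrite addr_ge0 ?sqr_ge0.
case=> Sh Sk hd; split => // e e0.
have e2 : 0 < e / 2 by lra.
have [q [Lq [h1 h2]]] := hd (e / 2) e2.
exists q; split => //; rewrite /dsnorm /=.
have a0 := hnorm_ge0 (ip := ip) (h - q.1).
have b0 := hnorm_ge0 (ip := ip') (k - q.2).
apply: (@le_lt_trans _ _ (N (h - q.1) + N' (k - q.2))).
  rewrite -[X in _ <= X]ger0_norm ?addr_ge0 // -sqrtr_sqr ler_sqrt ?sqr_ge0 //.
  nra.
lra.
Qed.

Lemma Delta_gen {phi} i : inAOm phi -> Dl (actA phi (f i), actA phi (g i)).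
Proof.
move=> Aphi; apply/DeltaP; split.
- by case: (qf_act qf Aphi (let: And3 h _ _ := gf in h i)).
- by case: (qf_act qf' Aphi (let: And3 h _ _ := gg in h i)).
- move=> e e0; exists (actA phi (f i), actA phi (g i)); split.
    by apply: lspan1; exists phi, i.
  by rewrite /= !subrr !(hnorm0 qf, hnorm0 qf').
Qed.

Lemma Delta0 : Dl (0, 0).
Proof.
apply/DeltaP; split; [exact: (qS0 qf)|exact: (qS0 qf')|].
move=> e e0; exists 0; split; first exact: lspan0.
by rewrite /= !subrr !(hnorm0 qf, hnorm0 qf').
Qed.

Lemma Delta_lin c {h k h' k'} : Dl (h, k) -> Dl (h', k') ->
  Dl (c *: h + h', c *: k + k').
Proof.
move=> /DeltaP [Sh Sk hd] /DeltaP [Sh' Sk' hd']; apply/DeltaP; split.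
- exact: (qSL qf).
- exact: (qSL qf').
move=> e e0.
have nc0 := nc_ge0 R c.
set K := nc c + 1.
have K0 : 0 < K by rewrite /K ltr_wpDl.
have e1 : 0 < e / 2 / K by rewrite divr_gt0 //; lra.
have [q [Lq [h1 h2]]] := hd _ e1.
have e2 : 0 < e / 2 by lra.
have [q' [Lq' [h1' h2']]] := hd' _ e2.
have [Sq1 Sq2] := Lset_S Lq; have [Sq1' Sq2'] := Lset_S Lq'.
exists (c *: q + q'); split; first exact: lspanL.
have KE : K * (e / 2 / K) = e / 2 by field; rewrite lt0r_neq0.
have eqA : forall (T : lmodType R[i]) (a b a' b' : T),
    c *: a + a' - (c *: b + b') = c *: (a - b) + (a' - b').
  by move=> T a b a' b'; rewrite scalerBr opprD addrACA.
split.
- rewrite /= eqA; eapply le_lt_trans.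
    by apply: (hnormL qf); apply: (qSB qf).
  exact: lin_bound (nc0) (hnorm_ge0 _) h1 h1'.
- rewrite /= eqA; eapply le_lt_trans.
    by apply: (hnormL qf'); apply: (qSB qf').
  exact: lin_bound (nc0) (hnorm_ge0 _) h2 h2'.
Qed.
Lemma Lset_act phi q : inAOm phi -> Lset q -> Lset (actA phi q.1, actA phi q.2).
Proof.
move=> Aphi Lq.
apply: (@lspan_ind _ _ _ (fun q => Lset (actA phi q.1, actA phi q.2)) _ _ _ q Lq).
- by rewrite /= !actA0; exact: lspan0.
- move=> c x y hx hy; rewrite /= !actAL.
  set a := actA phi x.1; set a' := actA phi x.2.
  set b := actA phi y.1; set b' := actA phi y.2.
  have -> : (c *: a + b, c *: a' + b') = c *: (a, a') + (b, b') by [].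
  exact: lspanL.
- move=> _ [psi [i [Apsi ->]]]; rewrite /= !actA_comp.
  apply: lspan1; exists (fun x => phi x * psi x), i; split => //.
  by apply: inA_mul => //; apply: (inA_bnd qf).
Qed.

Lemma Delta_act {phi h k} : inAOm phi -> Dl (h, k) -> Dl (actA phi h, actA phi k).
Proof.
move=> Aphi /DeltaP [Sh Sk hd]; apply/DeltaP; split.
- by case: (qf_act qf Aphi Sh).
- by case: (qf_act qf' Aphi Sk).
move=> e e0.
set M := `|supnorm phi|.
have M0 : 0 <= M by rewrite /M normr_ge0.
have K0 : 0 < M + 1 by rewrite ltr_wpDl.
have e1 : 0 < e / 2 / (M + 1) by rewrite divr_gt0 //; lra.
have [q [Lq [h1 h2]]] := hd _ e1.
have [Sq1 Sq2] := Lset_S Lq.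
exists (actA phi q.1, actA phi q.2); split; first exact: Lset_act.
have e2 : 0 < e / 2 by lra.
split; rewrite /= -actAB.
- have [_ hA] := qf_act qf Aphi (qSB qf Sh Sq1).
  apply: le_lt_trans hA _; apply: le_lt_trans (ler_wpM2r (hnorm_ge0 _) (ler_norm _)) _.
  by have := lin_bound M0 (hnorm_ge0 _) h1 e2; rewrite addr0.
- have [_ hA] := qf_act qf' Aphi (qSB qf' Sk Sq2).
  apply: le_lt_trans hA _; apply: le_lt_trans (ler_wpM2r (hnorm_ge0 _) (ler_norm _)) _.
  by have := lin_bound M0 (hnorm_ge0 _) h2 e2; rewrite addr0.
Qed.

Lemma Lset_rel z {q} : Lset q ->
  q.1 z *m invmx (\matrix_(i < m) f i z) = q.2 z *m invmx (\matrix_(i < m) g i z).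
Proof.
move=> Lq.
have uA := Amat_unit qf _ z gf; have uB := Amat_unit qf' _ z gg.
apply: (@lspan_ind _ _ _ (fun q => q.1 z *m invmx (\matrix_(i < m) f i z) =
   q.2 z *m invmx (\matrix_(i < m) g i z)) _ _ _ q Lq).
- by rewrite /= !feval0 !mul0mx.
- move=> c x y /= hx hy; rewrite !fevalL !mulmxDl -!scalemxAl.
  by rewrite hx hy.
- move=> _ [phi [i [Aphi ->]]] /=; rewrite /actA -!scalemxAl.
  congr (_ *: _).
  rewrite -[f i z](rowK (fun i => f i z)) -[g i z](rowK (fun i => g i z)).
  by rewrite !rowE !mulmxK.
Qed.

Lemma Delta_rel {h k} z : Dl (h, k) ->
  h z *m invmx (\matrix_(i < m) f i z) = k z *m invmx (\matrix_(i < m) g i z).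
Proof.
move=> /DeltaP [Sh Sk hd].
set iA := invmx _; set iB := invmx _.
apply/rowP => j; apply/eqP; rewrite -subr_eq0; apply/eqP; apply: nc_eq0.
have [M [M0 hM]] := evsq qf z; have [M' [M'0 hM']] := evsq qf' z.
set KA := \sum_l nc (iA l j); set KB := \sum_l nc (iB l j).
have KA0 : 0 <= KA by apply: sumr_ge0 => l _; exact: nc_ge0.
have KB0 : 0 <= KB by apply: sumr_ge0 => l _; exact: nc_ge0.
apply/eqP; rewrite eq_le nc_ge0 andbT.
apply: (@le0_by _ _ (M * KA + M' * KB)); first by rewrite addr_ge0 // mulr_ge0.
move=> e e0.
have [q [Lq [h1 h2]]] := hd e e0.
have [Sq1 Sq2] := Lset_S Lq.
have rq := Lset_rel z Lq.
have -> : (h z *m iA) 0 j - (k z *m iB) 0 j =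
    ((h - q.1) z *m iA) 0 j - ((k - q.2) z *m iB) 0 j.
  rewrite !fevalB !mulmxBl -/iA -/iB rq.
  set X := h z *m iA; set Y := k z *m iB; set Z := q.2 z *m iB.
  rewrite !mxE; ring.
eapply le_trans; first exact: ncD.
rewrite ncN.
have c1 : Num.sqrt (l2sq ((h - q.1) z)) <= M * e.
  apply: le_trans (hM _ (qSB qf Sh Sq1)) _; apply: ler_wpM2l => //; exact: ltW.
have c2 : Num.sqrt (l2sq ((k - q.2) z)) <= M' * e.
  apply: le_trans (hM' _ (qSB qf' Sk Sq2)) _; apply: ler_wpM2l => //; exact: ltW.
have d1 := le_trans (mx_ent ((h - q.1) z) iA j) (ler_wpM2r KA0 c1).
have d2 := le_trans (mx_ent ((k - q.2) z) iB j) (ler_wpM2r KB0 c2).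
apply: le_trans (lerD d1 d2) _.
by rewrite le_eqVlt; apply/orP; left; apply/eqP; ring.
Qed.

Lemma Delta_uniq {h k1 k2} : Dl (h, k1) -> Dl (h, k2) -> k1 = k2.
Proof.
move=> H1 H2; apply/funext => z.
have uB := Amat_unit qf' _ z gg.
have := Delta_rel z H1; rewrite (Delta_rel z H2).
by move/(congr1 (mulmx^~ (\matrix_(i < m) g i z))); rewrite !mulmxKV.
Qed.

Lemma Delta_inj {h1 h2 k} : Dl (h1, k) -> Dl (h2, k) -> h1 = h2.
Proof.
move=> H1 H2; apply/funext => z.
have uA := Amat_unit qf _ z gf.
have := Delta_rel z H1; rewrite -(Delta_rel z H2).
by move/(congr1 (mulmx^~ (\matrix_(i < m) f i z))); rewrite !mulmxKV.
Qed.

Lemma main_res :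
  exists (D : set (Vfun m Om)) (delta : Vfun m Om -> Vfun m Om),
    [/\
     [/\ D `<=` S, D 0,
         (forall (c : R[i]) h h', D h -> D h' -> D (c *: h + h')),
         (forall h, D h -> S' (delta h)) &
         (forall (c : R[i]) h h', D h -> D h' ->
            delta (c *: h + h') = c *: delta h + delta h')],
     Delta S S' ip ip' f g = [set p | D p.1 /\ p.2 = delta p.1],
     [/\ (forall (u : nat -> Vfun m Om) h k, (forall j, D (u j)) -> S h -> S' k ->
            nconv (hnorm ip) u h -> nconv (hnorm ip') (fun j => delta (u j)) k ->
            D h /\ delta h = k),
         (forall h, S h -> forall e : R, 0 < e ->
            exists d, D d /\ hnorm ip (h - d) < e),
         (forall h h', D h -> D h' -> delta h = delta h' -> h = h') &
         (forall k, S' k -> forall e : R, 0 < e ->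
            exists d, D d /\ hnorm ip' (k - delta d) < e)],
     (forall phi h, inAOm phi -> D h -> D (actA phi h)) &
     (forall phi h, inAOm phi -> D h ->
        exists h', D h' /\ delta h' = actA phi (delta h))]
    /\
    (forall phi h, inAOm phi -> D h -> delta (actA phi h) = actA phi (delta h)).
Proof.
pose D := fun h => exists k, Dl (h, k).
pose delta := fun h => match pselect (D h) with
  | left H => projT1 (cid H) | right _ => 0 end.
have deltaP : forall h, D h -> Dl (h, delta h).
  move=> h Dh; rewrite /delta; case: pselect => // H; exact: (projT2 (cid H)).
have DlD : forall h k, Dl (h, k) -> D h /\ delta h = k.
  move=> h k H; have Dh : D h by exists k.
  by split => //; apply: Delta_uniq (deltaP h Dh) H.
have DS : D `<=` S by move=> h [k /DeltaP [Sh _ _]].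
have D0 : D 0 by exists 0; exact: Delta0.
have DL : forall (c : R[i]) h h', D h -> D h' -> D (c *: h + h').
  move=> c h h' Dh Dh'; exists (c *: delta h + delta h').
  exact: Delta_lin (deltaP h Dh) (deltaP h' Dh').
have deltaL : forall (c : R[i]) h h', D h -> D h' ->
    delta (c *: h + h') = c *: delta h + delta h'.
  move=> c h h' Dh Dh'; by have [_ ->] := DlD _ _ (Delta_lin c (deltaP h Dh) (deltaP h' Dh')).
have Dact : forall phi h, inAOm phi -> D h -> Dl (actA phi h, actA phi (delta h)).
  by move=> phi h Aphi Dh; apply: Delta_act => //; apply: deltaP.
exists D, delta; split; first split; [split | | split | | | ].
- exact: DS.
- exact: D0.
- exact: DL.
- by move=> h Dh; case/DeltaP: (deltaP h Dh).
- exact: deltaL.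
- apply/seteqP; split => -[h k] /=.
    by move=> H; have [Dh <-] := DlD _ _ H.
  by move=> [Dh ->]; apply: deltaP.
- move=> u h k Du Sh Sk hu hdu; apply: DlD; apply/DeltaP; split => // e e0.
  have e2 : 0 < e / 2 by lra.
  have [K1 hK1] := hu _ e2; have [K2 hK2] := hdu _ e2.
  pose j := maxn K1 K2.
  have [_ _ hdj] := (DeltaP _ _).1 (deltaP _ (Du j)).
  have [q [Lq [h1 h2]]] := hdj _ e2.
  have [Sq1 Sq2] := Lset_S Lq.
  have Suj : S (u j) by apply: DS.
  have Sdj : S' (delta (u j)) by case/DeltaP: (deltaP _ (Du j)).
  exists q; split => //; split.
  + apply: le_lt_trans (hnorm_tri qf Sh Suj Sq1) _.
    rewrite (hnormB qf Sh Suj).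
    have := hK1 j (leq_maxl _ _); lra.
  + apply: le_lt_trans (hnorm_tri qf' Sk Sdj Sq2) _.
    rewrite (hnormB qf' Sk Sdj).
    have := hK2 j (leq_maxr _ _); lra.
- move=> h Sh e e0.
  have [_ hd _] := gf; have [_ hcl] := hd h Sh.
  have [G [LG hG]] := hcl e e0.
  exists G; split => //.
  apply: (@lspan_ind _ _ _ D _ _ _ G LG) => //.
  by move=> _ [phi [i [Aphi ->]]]; exists (actA phi (g i)); apply: Delta_gen.
- move=> h h' Dh Dh' e; apply: (Delta_inj (deltaP h Dh)).
  by rewrite e; apply: deltaP.
- move=> k Sk e e0.
  have [_ hd _] := gg; have [_ hcl] := hd k Sk.
  have [G [LG hG]] := hcl e e0.
  suff [d [Dd dG]] : exists d, D d /\ delta d = G by exists d; rewrite dG.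
  apply: (@lspan_ind _ _ _ (fun k => exists d, D d /\ delta d = k) _ _ _ G LG).
  + by exists 0; split => //; exact: (DlD _ _ Delta0).2.
  + move=> c x y [dx [Dx <-]] [dy [Dy <-]]; exists (c *: dx + dy); split.
      exact: DL.
    exact: deltaL.
  + move=> _ [phi [i [Aphi ->]]]; exists (actA phi (f i)).
    exact: DlD _ _ (Delta_gen i Aphi).
- by move=> phi h Aphi Dh; exact: (DlD _ _ (Dact phi h Aphi Dh)).1.
- move=> phi h Aphi Dh; exists (actA phi h).
  exact: DlD _ _ (Dact phi h Aphi Dh).
- by move=> phi h Aphi Dh; exact: (DlD _ _ (Dact phi h Aphi Dh)).2.
Qed.
End Main.

Theorem lemma1 (R : realType) (n m : nat) (Om : set (Cn R n))
  (S S' : set (Vfun m Om)) (ip ip' : Vfun m Om -> Vfun m Om -> R[i])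
  (f g : 'I_m -> Vfun m Om) :
  bounded_domain Om -> (1 <= m)%N ->
  quasi_free S ip -> quasi_free S' ip' ->
  generating_set S ip f -> generating_set S' ip' g ->
  exists (D : set (Vfun m Om)) (delta : Vfun m Om -> Vfun m Om),
    [/\
     (* delta is a linear transformation from R to R' with domain D *)
     [/\ D `<=` S, D 0,
         (forall (c : R[i]) h h', D h -> D h' -> D (c *: h + h')),
         (forall h, D h -> S' (delta h)) &
         (forall (c : R[i]) h h', D h -> D h' ->
            delta (c *: h + h') = c *: delta h + delta h')],
     (* Delta is its graph *)
     Delta S S' ip ip' f g = [set p | D p.1 /\ p.2 = delta p.1],
     (* closed, densely defined, one-to-one, with dense range *)
     [/\ (forall (u : nat -> Vfun m Om) h k, (forall j, D (u j)) -> S h -> S' k ->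
            nconv (hnorm ip) u h -> nconv (hnorm ip') (fun j => delta (u j)) k ->
            D h /\ delta h = k),
         (forall h, S h -> forall e : R, 0 < e ->
            exists d, D d /\ hnorm ip (h - d) < e),
         (forall h h', D h -> D h' -> delta h = delta h' -> h = h') &
         (forall k, S' k -> forall e : R, 0 < e ->
            exists d, D d /\ hnorm ip' (k - delta d) < e)],
     (* domain and range invariant under the module action *)
     (forall phi h, inAOm phi -> D h -> D (actA phi h)) &
     (forall phi h, inAOm phi -> D h ->
        exists h', D h' /\ delta h' = actA phi (delta h))]
    /\
    (* delta is a module transformation *)
    (forall phi h, inAOm phi -> D h -> delta (actA phi h) = actA phi (delta h)).
Proof.
move=> _ m1 qf qf' gf gg.
exact: (@main_res R n m Om S S' ip ip' f g m1 qf qf' gf gg).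
Qed.
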